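(* Let $0<\alpha<1$, $\gamma>0$, and let $h$ be a real normalised probability density on $(0,\infty)$ satisfying $$h(x)=\frac{\gamma}{x}\int_0^x\frac{h(u)}{(x-\alpha u)^{\gamma}}\,du,\qquad x\in(0,\infty).$$ Then $h$ is positive and for all $0<x<\infty$, $$\gamma x^{-\gamma-1}\exp\!\left[-(1-\alpha)^{-\gamma}x^{-\gamma}\right]\le h(x)\le \gamma(1-\alpha)^{-\gamma}x^{-\gamma-1}\exp\!\left[-x^{-\gamma}\right].$$ *)

(* Defs.v *)
From HB Require Import structures.
From mathcomp Require Import all_boot all_order all_algebra.
From mathcomp Require Import all_classical all_reals all_analysis.
Set Implicit Arguments. Unset Strict Implicit. Unset Printing Implicit Defensive.
Import Order.TTheory GRing.Theory Num.Theory.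
Local Open Scope classical_set_scope.
Local Open Scope ring_scope.

Definition prob_density_pos (R : realType) (h : R -> R) : Prop :=
  [/\ measurable_fun (`](0:R), +oo[ : set R) h,
      (forall x, 0 < x -> 0 <= h x) &
      (\int[@lebesgue_measure R]_(x in `](0%R:R), +oo[) (h x)%:E = 1)%E ].

(* Main.v *)
Require Import Defs.
From HB Require Import structures.
From mathcomp Require Import all_boot all_order all_algebra.
From mathcomp Require Import all_classical all_reals all_analysis.
From mathcomp Require Import ring lra.
Import Order.TTheory GRing.Theory Num.Theory.
Import numFieldNormedType.Exports.
Local Open Scope classical_set_scope.
Local Open Scope ring_scope.
Set Implicit Arguments. Unset Strict Implicit.
Local Notation mu := (@lebesgue_measure _).
Import measurable_realfun.
Lemma dens_int (R : realType) (h : R -> R) : prob_density_pos h ->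
  mu.-integrable `](0:R), +oo[ (EFin \o h).
Proof.
case=> mh h0 h1; apply/integrableP; split; first exact/measurable_EFinP.
under eq_integral => u.
  rewrite inE/= in_itv/= andbT => u0.
  rewrite ger0_norm ?h0//.
  over.
by rewrite /= h1 ltry.
Qed.
Definition Hc {R : realType} (h : R -> R) (x : R) : R :=
  (\int[mu]_(u in `](0:R), x[) h u)%R.

Lemma Hc_props (R : realType) (h : R -> R) (x : R) : prob_density_pos h ->
  [/\ (\int[mu]_(u in `](0%R:R), x[) (h u)%:E)%E = (Hc h x)%:E,
      0 <= Hc h x & Hc h x <= 1].
Proof.
move=> hd; have hi := dens_int hd; case: hd => mh h0 h1.
have sub : `](0:R), x[ `<=` `](0:R), +oo[.
  by apply: subset_itvl; rewrite bnd_simp.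
have hix : mu.-integrable `](0:R), x[ (EFin \o h).
  exact: integrableS hi.
have fx : (\int[mu]_(u in `](0%R:R), x[) (h u)%:E)%E \is a fin_num.
  exact: integrable_fin_num hix.
have e : (\int[mu]_(u in `](0%R:R), x[) (h u)%:E)%E = (Hc h x)%:E.
  by rewrite /Hc /Rintegral fineK.
have le1 : (\int[mu]_(u in `](0%R:R), x[) (h u)%:E <= 1)%E.
  rewrite -h1; apply: ge0_subset_integral => //.
  - exact/measurable_EFinP.
  - by move=> u; rewrite /= in_itv/= andbT => u0; rewrite lee_fin h0.
split => //.
- rewrite -lee_fin -e; apply: integral_ge0 => u.
  by rewrite /= in_itv/= => /andP[u0 _]; rewrite lee_fin h0.
- by rewrite -lee_fin -e.
Qed.
Lemma powR_m1 (R : realType) (x g : R) : 0 < x -> x `^ (- g - 1) = x `^ (- g) / x.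
Proof.
move=> x0; rewrite powRD; last by rewrite (gt_eqF x0) implybT.
by rewrite powR_inv1// ltW.
Qed.

Lemma h_bounds (R : realType) (alpha gamma : R) (h : R -> R)
  (halpha0 : 0 < alpha) (halpha1 : alpha < 1) (hgamma : 0 < gamma)
  (hdens : prob_density_pos h)
  (heq : forall x : R, 0 < x ->
     (h x)%:E = ((gamma / x)%:E *
       \int[@lebesgue_measure R]_(u in `](0%R:R), x[) (h u / (x - alpha * u) `^ gamma)%:E)%E)
  (x : R) : 0 < x ->
  gamma * x `^ (- gamma - 1) * Hc h x <= h x /\
  h x <= gamma * (1 - alpha) `^ (- gamma) * x `^ (- gamma - 1) * Hc h x.
Proof.
move=> x0; have [HE H0 H1] := Hc_props x hdens.
have hi := dens_int hdens; case: hdens => mh h0 h1.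
have sub : `](0:R), x[ `<=` `](0:R), +oo[.
  by apply: subset_itvl; rewrite bnd_simp.
have mhx : measurable_fun `](0:R), x[ h := measurable_funS (measurable_itv _) sub mh.
have mI : measurable_fun `](0:R), x[ (fun u => (h u / (x - alpha * u) `^ gamma)%:E).
  apply/measurable_EFinP.
  rewrite (_ : (fun u => _) = h \* (fun u => (x - alpha * u) `^ (- gamma))); last first.
    by apply/funext => u; rewrite /= powRN.
  apply: measurable_funM => //; apply: measurable_funTS.
  apply: (measurableT_comp (measurable_powR _)).
  apply: continuous_measurable_fun => u.
  apply: continuousB; first exact: cvg_cst.
  by apply: continuousM; [exact: cvg_cst|exact: cvg_id].
have mhE : measurable_fun `](0:R), x[ (EFin \o h) by exact/measurable_EFinP.
have hge : forall u, [set` `](0:R), x[] u -> (0 <= (h u)%:E)%E.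
  by move=> u; rewrite /= in_itv/= => /andP[u0 _]; rewrite lee_fin h0.
set c := (1 - alpha) `^ (- gamma).
have c0 : 0 < c by rewrite powR_gt0// subr_gt0.
have key : forall u, [set` `](0:R), x[] u ->
    x `^ (- gamma) <= ((x - alpha * u) `^ gamma)^-1 <= c * x `^ (- gamma).
  move=> u; rewrite /= in_itv/= => /andP[u0 ux].
  have d0 : 0 < x - alpha * u.
    by rewrite subr_gt0 (lt_trans _ ux)// gtr_pMl.
  have dle : x - alpha * u <= x by rewrite lerBlDr lerDl mulr_ge0// ltW.
  have dge : (1 - alpha) * x <= x - alpha * u.
    by rewrite mulrBl mul1r lerB// ler_pM2l// ltW.
  apply/andP; split.
    rewrite powRN lef_pV2 ?posrE ?powR_gt0//.
    by apply: ge0_ler_powR => //; rewrite ?nnegrE ltW.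
  have au : alpha * u < x by rewrite -subr_gt0.
  rewrite /c -powRM; last 2 first; [by rewrite subr_ge0 ltW|by rewrite ltW|]; rewrite powRN lef_pV2 ?posrE ?powR_gt0 ?mulr_gt0 ?subr_gt0//.
  apply: ge0_ler_powR => //; rewrite ?nnegrE ?(ltW hgamma) ?(ltW d0)//.
  by rewrite mulr_ge0// ?subr_ge0 ltW.
have lo : ((x `^ (- gamma) * Hc h x)%:E <=
   \int[mu]_(u in `](0%R:R), x[) (h u / (x - alpha * u) `^ gamma)%:E)%E.
  rewrite EFinM -HE -ge0_integralZl_EFin//; last exact: powR_ge0.
  apply: ge0_le_integral => //.
  - by move=> v /hge v0; rewrite mule_ge0// lee_fin powR_ge0.
  - by apply: measurable_funeM.
  - move=> u ux; have /andP[k1 _] := key u ux; have := hge u ux.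
    by rewrite /= -EFinM !lee_fin => hu0; rewrite (mulrC _ (h u)); exact: ler_wpM2l.
have up : (\int[mu]_(u in `](0%R:R), x[) (h u / (x - alpha * u) `^ gamma)%:E <=
    (c * x `^ (- gamma) * Hc h x)%:E)%E.
  rewrite EFinM -HE -ge0_integralZl_EFin//; last by rewrite mulr_ge0 ?powR_ge0// ltW.
  apply: ge0_le_integral => //.
  - move=> u ux; have := hge u ux.
    by rewrite !lee_fin => hu0; rewrite divr_ge0// powR_ge0.
  - by apply: measurable_funeM.
  - move=> u ux; have /andP[_ k2] := key u ux; have := hge u ux.
    by rewrite /= -EFinM !lee_fin => hu0; rewrite (mulrC _ (h u)); exact: ler_wpM2l.
have g0 : (0 <= (gamma / x)%:E)%E by rewrite lee_fin divr_ge0// ltW.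
have e1 : gamma * x `^ (- gamma - 1) * Hc h x = gamma / x * (x `^ (- gamma) * Hc h x).
  by rewrite powR_m1//; ring.
have e2 : gamma * c * x `^ (- gamma - 1) * Hc h x = gamma / x * (c * x `^ (- gamma) * Hc h x).
  by rewrite powR_m1//; ring.
split.
  rewrite e1 -lee_fin heq// (EFinM (gamma / x)); exact: lee_wpmul2l.
rewrite e2 -lee_fin heq// (EFinM (gamma / x)); exact: lee_wpmul2l.
Qed.
Lemma Hc_large (R : realType) (h : R -> R) (x eps : R) : prob_density_pos h ->
  0 < eps -> exists y, x <= y /\ 1 - eps < Hc h y.
Proof.
move=> hd e0; have hd' := hd; case: hd' => mh h0 h1.
pose F (k : nat) := [set` Interval (BRight (0:R)) (BLeft k%:R)].
have nF : nondecreasing_seq F.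
  by move=> n m nm; rewrite subsetEset; apply: subset_itvl; rewrite bnd_simp ler_nat.
have mF : forall i, measurable_fun (F i) (EFin \o h).
  move=> i; apply/measurable_EFinP; apply: measurable_funS mh => //.
  by apply: subset_itvl; rewrite bnd_simp.
have F0 : forall i u, F i u -> (0 <= (EFin \o h) u)%E.
  by move=> i u; rewrite /F/= in_itv/= => /andP[u0 _]; rewrite lee_fin h0.
move: (ge0_nondecreasing_set_cvg_integral (mu := @lebesgue_measure R) nF (fun i => measurable_itv _) mF F0); rewrite -itvbndyEbigcup h1.
have -> : (fun i => (\int[mu]_(x in F i) (EFin \o h) x)%E) = (fun i => (Hc h i%:R)%:E).
  by apply/funext => i; have [-> _ _] := Hc_props (i%:R) hd.
move/fine_cvgP => [_ /cvgrPdist_lt /(_ _ e0)] cvr.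
have [n [nx nH]] : exists n : nat, x <= n%:R /\ `|1 - Hc h n%:R| < eps.
  near \oo => n; exists n; split; last by near: n.
  near: n; exact: nbhs_infty_ger.
exists n%:R; split => //.
by rewrite ltrBlDl -ltrBlDr; apply: le_lt_trans nH; exact: ler_norm.
Unshelve. all: end_near.
Qed.
Lemma gron (R : realType) (x y k g H0 : R) (G : R -> R) :
  0 < x -> x < y -> {within `[x, y], continuous G} ->
  let b := fun u => k * (g * u `^ (- g - 1)) * (H0 + G u) in
  let P := fun z => (\int[mu]_(u in `[x, z]) b u)%R in
  let Q := fun z => (H0 + P z) * expR (k * z `^ (- g)) in
  [/\ {within `[x, y], continuous Q},
      (forall z, z \in `]x, y[ -> derivable Q z 1 /\
        Q^`()%classic z = k * (g * z `^ (- g - 1)) * expR (k * z `^ (- g)) * (G z - P z)),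
      P x = 0 &
      mu.-integrable `[x, y] (EFin \o b)].
Proof.
move=> x0 xy cG b P Q.
have pw : forall r, {within `[x, y], continuous (fun u : R => u `^ r)}.
  move=> r; apply: derivable_within_continuous => u.
  rewrite in_itv/= => /andP[xu _]; apply: derivable_powR.
  by rewrite in_itv/= andbT (lt_le_trans x0 xu).
have cb : {within `[x, y], continuous b}.
  move=> u; apply: (@continuousM R (subspace `[x, y]) (fun u => k * (g * u `^ (- g - 1))) (fun u => H0 + G u)).
    apply: (@continuousM R (subspace `[x, y]) (fun=> k)); first exact: cvg_cst.
    by apply: (@continuousM R (subspace `[x, y]) (fun=> g)); [exact: cvg_cst|exact: pw].
  by apply: (@continuousD _ _ (subspace `[x, y]) (fun=> H0)); [exact: cvg_cst|exact: cG].
have ib : mu.-integrable `[x, y] (EFin \o b).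
  exact: continuous_compact_integrable (@segment_compact _ _ _) cb.
have cP : {within `[x, y], continuous P}.
  exact: (parameterized_integral_continuous (ltW xy) ib).
have cE : {within `[x, y], continuous (fun z => expR (k * z `^ (- g)))}.
  move=> u; apply: (@continuous_comp (subspace `[x, y]) _ _ (fun z => k * z `^ (- g)) expR).
    by apply: (@continuousM R (subspace `[x, y]) (fun=> k)); [exact: cvg_cst|exact: pw].
  exact: continuous_expR.
split => //.
- move=> u; apply: (@continuousM R (subspace `[x, y]) (fun z => H0 + P z)); last exact: cE.
  by apply: (@continuousD _ _ (subspace `[x, y]) (fun=> H0)); [exact: cvg_cst|exact: cP].
- move=> z zxy; have := zxy; rewrite in_itv/= => /andP[xz zy].
  have z0 : 0 < z by exact: lt_trans xz.
  have cbz : {for z, continuous b}.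
    by have [+ _ _] := (continuous_within_itvP b xy).1 cb; apply.
  have [dP P'] := @continuous_FTC1_closed R b x z y zy ib xz cbz.
  have iP : is_derive z 1 P (b z).
    by apply: DeriveDef; [exact: dP|rewrite -derive1E P'].
  have iK : is_derive z 1 (fun z => k * z `^ (- g)) (k * (- g * z `^ (- g - 1))).
    exact: (is_deriveZ k (is_derive1_powR (- g) z0)).
  have iE : is_derive z 1 (fun z => expR (k * z `^ (- g)))
      (expR (k * z `^ (- g)) * (k * (- g * z `^ (- g - 1)))).
    exact: (is_derive1_comp (is_derive_expR _) iK).
  have iH : is_derive z 1 (fun z => H0 + P z) (0 + b z).
    exact: (is_deriveD (is_derive_cst H0 _ _) iP).
  have iQ := is_deriveM iH iE.
  split; first exact: (@ex_derive _ _ _ _ _ _ _ iQ).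
  rewrite derive1E (@derive_val _ _ _ _ _ _ _ iQ) /b /=.
  rewrite /GRing.scale /=; ring.
- by rewrite /P/= set_itv1 Rintegral_set1.
Qed.
Lemma gron_up (R : realType) (x y k g H0 : R) (hh : R -> R) :
  0 < x -> x < y -> 0 <= k -> 0 <= g ->
  mu.-integrable `[x, y] (EFin \o hh) ->
  (forall u, x <= u <= y ->
     k * (g * u `^ (- g - 1)) * (H0 + (\int[mu]_(t in `[x, u]) hh t)%R) <= hh u) ->
  H0 * expR (k * x `^ (- g)) <=
    (H0 + (\int[mu]_(t in `[x, y]) hh t)%R) * expR (k * y `^ (- g)).
Proof.
move=> x0 xy k0 g0 ih hb.
pose G := fun z => (\int[mu]_(t in `[x, z]) hh t)%R.
have cG : {within `[x, y], continuous G}.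
  exact: (parameterized_integral_continuous (ltW xy) ih).
have [cQ dQ Px ib] := @gron R x y k g H0 G x0 xy cG.
pose b := fun u => k * (g * u `^ (- g - 1)) * (H0 + G u).
pose P := fun z => (\int[mu]_(u in `[x, z]) b u)%R.
pose Q := fun z => (H0 + P z) * expR (k * z `^ (- g)).
have PG : forall z, x <= z <= y -> P z <= G z.
  move=> z /andP[xz zy]; apply: le_Rintegral => //.
  - apply: integrableS ib => //; apply: subset_itvl; rewrite bnd_simp//.
  - apply: integrableS ih => //; apply: subset_itvl; rewrite bnd_simp//.
  - move=> u; rewrite /= in_itv/= => /andP[xu uz]; apply: hb.
    by rewrite xu (le_trans uz).
have mono := @ger0_derive1_ndecr R Q x y.
have : Q x <= Q y.
  apply: mono; [by move=> z /dQ[] | | exact: cQ | exact: lexx | exact: ltW | exact: lexx].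
  move=> z zxy; have [_ ->] := dQ z zxy.
    have := zxy; rewrite in_itv/= => /andP[xz zy].
    rewrite mulr_ge0 ?subr_ge0 ?PG ?(ltW xz) ?(ltW zy)//.
    by rewrite !mulr_ge0// ?powR_ge0 ?expR_ge0.
have Px2 : P x = 0 := Px.
rewrite /Q Px2 addr0 => /le_trans; apply.
rewrite ler_wpM2r ?expR_ge0// lerD2l; apply: PG.
by rewrite (ltW xy) lexx.
Qed.

Lemma gron_down (R : realType) (x y k g H0 : R) (hh : R -> R) :
  0 < x -> x < y -> 0 <= k -> 0 <= g ->
  mu.-integrable `[x, y] (EFin \o hh) ->
  (forall u, x <= u <= y ->
     hh u <= k * (g * u `^ (- g - 1)) * (H0 + (\int[mu]_(t in `[x, u]) hh t)%R)) ->
  0 <= H0 + (\int[mu]_(t in `[x, y]) hh t)%R ->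
  (H0 + (\int[mu]_(t in `[x, y]) hh t)%R) <= H0 * expR (k * x `^ (- g)).
Proof.
move=> x0 xy k0 g0 ih hb Hy0.
pose G := fun z => (\int[mu]_(t in `[x, z]) hh t)%R.
have cG : {within `[x, y], continuous G}.
  exact: (parameterized_integral_continuous (ltW xy) ih).
have [cQ dQ Px ib] := @gron R x y k g H0 G x0 xy cG.
pose b := fun u => k * (g * u `^ (- g - 1)) * (H0 + G u).
pose P := fun z => (\int[mu]_(u in `[x, z]) b u)%R.
pose Q := fun z => (H0 + P z) * expR (k * z `^ (- g)).
have PG : forall z, x <= z <= y -> G z <= P z.
  move=> z /andP[xz zy]; apply: le_Rintegral => //.
  - apply: integrableS ih => //; apply: subset_itvl; rewrite bnd_simp//.
  - apply: integrableS ib => //; apply: subset_itvl; rewrite bnd_simp//.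
  - move=> u; rewrite /= in_itv/= => /andP[xu uz]; apply: hb.
    by rewrite xu (le_trans uz).
have mono := @ler0_derive1_nincr R Q x y.
have : Q y <= Q x.
  apply: mono; [by move=> z /dQ[] | | exact: cQ | exact: lexx | exact: ltW | exact: lexx].
  move=> z zxy; have [_ ->] := dQ z zxy.
    have := zxy; rewrite in_itv/= => /andP[xz zy].
    rewrite mulr_ge0_le0 ?subr_le0 ?PG ?(ltW xz) ?(ltW zy)//.
    by rewrite !mulr_ge0// ?powR_ge0 ?expR_ge0.
have Px2 : P x = 0 := Px.
rewrite /Q Px2 addr0; apply: le_trans.
have yy : x <= y <= y by rewrite (ltW xy) lexx.
apply: (@le_trans _ _ (H0 + P y)); first by rewrite lerD2l PG.
rewrite -[leLHS]mulr1 ler_wpM2l//; last first.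
  by rewrite -expR0 ler_expR mulr_ge0// powR_ge0.
by apply: le_trans Hy0 _; rewrite lerD2l PG.
Qed.
Lemma Hc_split (R : realType) (h : R -> R) (x y : R) : prob_density_pos h ->
  0 < x -> x <= y -> Hc h y = Hc h x + (\int[mu]_(u in `[x, y]) h u)%R.
Proof.
move=> hd x0 xy; have hi := dens_int hd.
have sub : `](0:R), y[ `<=` `](0:R), +oo[.
  by apply: subset_itvl; rewrite bnd_simp.
have hiy : mu.-integrable `](0:R), y[ (EFin \o h) by exact: integrableS hi.
rewrite /Hc (@itv_bndbnd_setU _ _ (BRight 0) (BLeft x) (BLeft y)); last 2 first.
  by rewrite bnd_simp. by rewrite bnd_simp.
rewrite Rintegral_setU//=; last 2 first.
  by rewrite -itv_bndbnd_setU// bnd_simp.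
  apply/disj_set2P; rewrite -subset0 => z/=; rewrite !in_itv/= => -[/andP[_]].
  by rewrite ltNge => /negbTE ->.
congr (_ + _); apply: Rintegral_itv_bndo_bndc.
apply: integrableS hiy => //; apply: subset_itvr; rewrite bnd_simp//.
Qed.
Lemma powR_Ndecr (R : realType) (a b g : R) : 0 < a -> a <= b -> 0 <= g ->
  b `^ (- g) <= a `^ (- g).
Proof.
move=> a0 ab g0; have b0 : 0 < b := lt_le_trans a0 ab.
rewrite !powRN lef_pV2 ?posrE ?powR_gt0//.
by apply: ge0_ler_powR => //; rewrite nnegrE ltW.
Qed.

Unset Implicit Arguments.

Theorem mainTheorem3 (R : realType) (alpha gamma : R) (h : R -> R)
  (halpha0 : 0 < alpha) (halpha1 : alpha < 1) (hgamma : 0 < gamma)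
  (hdens : prob_density_pos h)
  (heq : forall x : R, 0 < x ->
     (h x)%:E = ((gamma / x)%:E *
       \int[@lebesgue_measure R]_(u in `](0%R:R), x[) (h u / (x - alpha * u) `^ gamma)%:E)%E) :
  forall x : R, 0 < x ->
    [/\ 0 < h x,
        gamma * x `^ (- gamma - 1) * expR (- ((1 - alpha) `^ (- gamma) * x `^ (- gamma))) <= h x &
        h x <= gamma * (1 - alpha) `^ (- gamma) * x `^ (- gamma - 1) * expR (- x `^ (- gamma))].
Proof.
move=> x x0.
set c := (1 - alpha) `^ (- gamma).
have c0 : 0 < c by rewrite powR_gt0// subr_gt0.
have hi := dens_int hdens.
have [_ H0 H1] := Hc_props x hdens.
have hb := h_bounds halpha0 halpha1 hgamma hdens heq.
have ihxy : forall y, x < y -> mu.-integrable `[x, y] (EFin \o h).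
  move=> y xy; apply: integrableS hi => //.
  by move=> u; rewrite /= !in_itv/= => /andP[xu _]; rewrite andbT (lt_le_trans x0 xu).
have HS : forall u, x <= u -> Hc h u = Hc h x + (\int[mu]_(t in `[x, u]) h t)%R.
  by move=> u xu; apply: Hc_split.
have UP : forall y, x < y -> Hc h x * expR (x `^ (- gamma)) <= expR (y `^ (- gamma)).
  move=> y xy.
  have := @gron_up R x y 1 gamma (Hc h x) h x0 xy ler01 (ltW hgamma) (ihxy y xy).
  rewrite !mul1r -HS ?(ltW xy)//.
  move=> /(_ _) /le_trans; apply.
    move=> u /andP[xu uy]; rewrite -HS//.
    by rewrite mul1r; have [] := hb u (lt_le_trans x0 xu).
  rewrite -[leRHS]mul1r ler_wpM2r ?expR_ge0//.
  by have [] := Hc_props y hdens.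
have LOW : forall y, x < y -> Hc h y <= Hc h x * expR (c * x `^ (- gamma)).
  move=> y xy.
  have := @gron_down R x y c gamma (Hc h x) h x0 xy (ltW c0) (ltW hgamma) (ihxy y xy).
  rewrite -HS ?(ltW xy)//; apply.
    move=> u /andP[xu uy]; rewrite -HS//.
    have [_ H] := hb u (lt_le_trans x0 xu); apply: (le_trans H).
    by rewrite /c le_eqVlt; apply/orP; left; apply/eqP; ring.
  by have [] := Hc_props y hdens.
have UB1 : Hc h x * expR (x `^ (- gamma)) <= 1.
  rewrite leNgt; apply/negP => L1.
  set L := Hc h x * expR (x `^ (- gamma)) in L1.
  have L0 : 0 < L by exact: lt_trans L1.
  set s := ln L / 2.
  have s0 : 0 < s by rewrite divr_gt0// ln_gt0.
  set y := Num.max (x + 1) (s `^ (- gamma^-1)).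
  have xy : x < y by rewrite lt_max ltrDl ltr01.
  have sy : s `^ (- gamma^-1) <= y by rewrite le_max lexx orbT.
  have ys : y `^ (- gamma) <= s.
    apply: (le_trans (powR_Ndecr _ sy (ltW hgamma))); first exact: powR_gt0.
    by rewrite -powRrM mulrNN mulVf ?gt_eqF// powRr1// ltW.
  have := UP y xy; rewrite -/L => Ly.
  have : expR (y `^ (- gamma)) < L.
    apply: (le_lt_trans (_ : _ <= expR s)); first by rewrite ler_expR.
    rewrite -[ltRHS]lnK ?posrE// ltr_expR /s ltr_pdivrMr// ltr_pMr ?ln_gt0//.
    by rewrite ltr1n.
  by rewrite ltNge Ly.
have LB1 : 1 <= Hc h x * expR (c * x `^ (- gamma)).
  rewrite leNgt; apply/negP => L1.
  set M := Hc h x * expR (c * x `^ (- gamma)) in L1.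
  have M1 : 0 < 1 - M by rewrite subr_gt0.
  have [y [xy Hy]] := @Hc_large R h (x + 1) (1 - M) hdens M1.
  have x1 : x < x + 1 by rewrite ltrDl ltr01.
  have := LOW y (lt_le_trans x1 xy).
  rewrite -/M => HM.
  by move: Hy; rewrite opprB addrCA subrr addr0 ltNge HM.
have [hl hu] := hb x x0.
have lo : gamma * x `^ (- gamma - 1) * expR (- (c * x `^ (- gamma))) <= h x.
  apply: le_trans hl; rewrite ler_wpM2l ?mulr_ge0 ?powR_ge0 ?(ltW hgamma)//.
  by rewrite expRN -[_^-1]mul1r ler_pdivrMr ?expR_gt0.
split => //.
- apply: lt_le_trans lo; rewrite mulr_gt0 ?expR_gt0// mulr_gt0// powR_gt0//.
- apply: le_trans hu _; rewrite ler_wpM2l ?mulr_ge0 ?powR_ge0 ?(ltW hgamma) ?(ltW c0)//.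
  by rewrite expRN -[_^-1]mul1r ler_pdivlMr ?expR_gt0.
Qed.
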